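(* Let $(G,k,M^*,M)$ be a critical tuple and fix an edge $e\in E^+(C^+)$. If $e\notin r_b(C_e)$, then there exists a set $\mathcal{Q}$ of forward jumps of $C_e$ such that $C^+=\bigcup_{Q\in\mathcal{Q}} r(Q)\cup\bigcup_{P\in\mathcal{I}_e}P$ and no $Q\in\mathcal{Q}$ satisfies $e\in r(Q)$.
   Context: $R(H)$ is the set of red edges of an edge set $H$. For a perfect matching $M$ of a red/blue edge-colored bipartite graph $G=(A\sqcup B,E)$, $G_M$ is the directed graph on $A\sqcup B$ with edges of $M$ oriented from $A$ to $B$ and other edges from $B$ to $A$, weighted by $w_M(e)=0$ for blue $e$, $-1$ for red $e\in M$, $+1$ for red $e\notin M$; $E^+(H)$ (resp. $E^-(H)$) is the set of red edges of $H$ not in $M$ (resp. in $M$), $w_M(H)=|E^+(H)|-|E^-(H)|$. Paths and cycles are directed and identified with edge sets. For an edge $e$, $M^e$ is a perfect matching containing $e$ with the minimum number of red edges among those containing $e$. A tuple $(G,k,M^*,M)$ is critical if: every edge of $G$ lies in some perfect matching; $|R(M^* )|=k$; $|R(M)|<\frac13k$; every directed cycle $C$ of $G_M$ with $w_M(C)>0$ has $|E^+(C)|>\frac23k$; and $|R(M^e)|<\frac13k$ for every red $e\in M^*\setminus M$. $C^+$ is the unique positive-weight directed cycle of $G_M$ contained in $M\Delta M^*$. For $e\in E^+(C^+)$, $C_e$ is the unique directed cycle of $G_M$ in $M\Delta M^e$ containing $e$. A jump of $C_e$ is a sub-path $Q$ of $C_e$ with endpoints on $C^+$, no inner vertex on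 $C^+$ and $Q\cap C^+=\emptyset$; interjumps are the sub-paths of $C_e$ contained in $C^+$ between consecutive jumps, and $\mathcal{I}_e$ is the set of interjumps of $C_e$. For a jump $Q$, $C_Q$ is the unique directed cycle in $C^+\cup Q$ containing $Q$; $Q$ is forward if $w_M(C_Q)>0$, backward otherwise; reach $r(Q)=C^+\setminus C_Q$ if forward, $r(Q)=C_Q\setminus Q$ if backward. $r_b(C_e)$ is the union of the reaches of all backward jumps of $C_e$. *)

(* Defs.v *)
From mathcomp Require Import all_boot all_order all_algebra.
From Stdlib Require Import ClassicalEpsilon.
Set Implicit Arguments. Unset Strict Implicit. Unset Printing Implicit Defensive.
Import GRing.Theory Num.Theory.

Section Defs.
Variables (A B : finType).

(* An edge is a pair (a,b) in A * B; the graph is the edge set E; the red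
   edges are the set R (edges of E not in R are blue). *)
Notation edge := (A * B)%type.
Notation vertex := (A + B)%type.

Definition is_pm (E M : {set edge}) : Prop :=
  M \subset E /\
  (forall a : A, #|[set b : B | (a, b) \in M]| = 1%N) /\
  (forall b : B, #|[set a : A | (a, b) \in M]| = 1%N).

Definition red_of (R H : {set edge}) : {set edge} := H :&: R.

(* orientation in G_M: M-edges from A to B, other edges from B to A *)
Definition tl (M : {set edge}) (x : edge) : vertex :=
  if x \in M then inl x.1 else inr x.2.
Definition hd (M : {set edge}) (x : edge) : vertex :=
  if x \in M then inr x.2 else inl x.1.

Definition Eplus (R M H : {set edge}) : {set edge} := [set x in H | (x \in R) && (x \notin M)].
Definition Eminus (R M H : {set edge}) : {set edge} := [set x in H | (x \in R) && (x \in M)].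
Definition wM (R M H : {set edge}) : int := (#|Eplus R M H|%:Z - #|Eminus R M H|%:Z)%R.

Definition step (M : {set edge}) (x y : edge) : bool := hd M x == tl M y.

(* directed cycle of G_M, identified with its edge set *)
Definition is_dcycle (E M C : {set edge}) : Prop :=
  exists s : seq edge, s != [::] /\ C = [set x in s] /\ all (fun x => x \in E) s /\
    cycle (step M) s /\ uniq (map (hd M) s).

Definition dpath_seq (E M : {set edge}) (u : vertex) (s : seq edge) (v : vertex) : Prop :=
  exists x s', s = x :: s' /\ all (fun y => y \in E) s /\ path (step M) x s' /\
    tl M x = u /\ hd M (last x s') = v /\ uniq (u :: map (hd M) s).

Definition inner (M : {set edge}) (s : seq edge) : seq vertex :=
  map (hd M) (take (size s).-1 s).

Definition is_dpath (E M P : {set edge}) (u v : vertex) : Prop :=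
  exists s, dpath_seq E M u s v /\ P = [set x in s].

Definition Vof (H : {set edge}) : {set vertex} :=
  [set inl x.1 | x in H] :|: [set inr x.2 | x in H].

Definition subpath (E M C P : {set edge}) : Prop :=
  P \subset C /\ exists u v, is_dpath E M P u v.

Definition is_jump (E M Cp Ce Q : {set edge}) : Prop :=
  Q \subset Ce /\
  exists u s v, dpath_seq E M u s v /\ Q = [set x in s] /\
    u \in Vof Cp /\ v \in Vof Cp /\ all (fun y => y \notin Vof Cp) (inner M s) /\
    [disjoint Q & Cp].

(* C_Q : the unique directed cycle in C^+ \cup Q containing Q *)
Definition CQ (E M Cp Q : {set edge}) : {set edge} :=
  epsilon (inhabits set0)
    (fun D => is_dcycle E M D /\ Q \subset D /\ D \subset Cp :|: Q).

Definition forward (E R M Cp Q : {set edge}) : Prop := (0 < wM R M (CQ E M Cp Q))%R.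

Definition reach (E R M Cp Q : {set edge}) : {set edge} :=
  if (0 < wM R M (CQ E M Cp Q))%R then Cp :\: CQ E M Cp Q
  else CQ E M Cp Q :\: Q.

(* interjumps of Ce: the maximal sub-paths of Ce contained in Cp
   (= the parts of Ce in Cp between consecutive jumps); if Ce has no
   jump, i.e. Ce is contained in Cp, the single interjump is Ce itself. *)
Definition is_interjump (E M Cp Ce P : {set edge}) : Prop :=
  if Ce \subset Cp then P = Ce
  else subpath E M Ce P /\ P \subset Cp /\
       (forall P', subpath E M Ce P' -> P' \subset Cp -> P \subset P' -> P' = P).

(* critical tuple (G,k,M*,M); Me x is the chosen M^x *)
Definition critical (E R : {set edge}) (k : nat) (Ms M : {set edge})
    (Me : edge -> {set edge}) : Prop :=
  (forall x, x \in E -> exists M', is_pm E M' /\ x \in M') /\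
  is_pm E Ms /\ is_pm E M /\
  #|red_of R Ms| = k /\
  (3 * #|red_of R M| < k)%N /\
  (forall C, is_dcycle E M C -> (0 < wM R M C)%R -> (2 * k < 3 * #|Eplus R M C|)%N) /\
  (forall x, x \in R -> x \in Ms :\: M -> (3 * #|red_of R (Me x)| < k)%N).

Definition is_Me (E R : {set edge}) (Me : edge -> {set edge}) : Prop :=
  forall x, x \in E -> is_pm E (Me x) /\ x \in Me x /\
    (forall M', is_pm E M' -> x \in M' -> (#|red_of R (Me x)| <= #|red_of R M'|)%N).

Definition symdiff (X Y : {set edge}) : {set edge} := (X :\: Y) :|: (Y :\: X).

End Defs.

(* Main.v *)
Require Import Defs.
From mathcomp Require Import all_boot all_order all_algebra.
From Stdlib Require Import ClassicalEpsilon.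
From mathcomp Require Import zify.
Import Order.TTheory GRing.Theory Num.Theory.
Set Implicit Arguments. Unset Strict Implicit. Unset Printing Implicit Defensive.

Lemma uniq_map_eq (T U : eqType) (f : T -> U) s x y :
  uniq (map f s) -> x \in s -> y \in s -> f x = f y -> x = y.
Proof.
elim: s => //= a s IH /andP[ha hs]; rewrite !inE => /orP[/eqP->|hx] /orP[/eqP->|hy] //.
- move=> E1; case/negP: ha; rewrite E1; exact: map_f.
- move=> E1; case/negP: ha; rewrite -E1; exact: map_f.
- exact: IH.
Qed.

Section Cyc.
Variables (A B : finType) (E M : {set A * B}).
Local Notation edge := (A * B)%type.
Variable s : seq edge.
Hypothesis hcyc : cycle (step M) s.
Hypothesis huq : uniq (map (hd M) s).
Hypothesis hne : 0 < size s.
Variable x0 : edge.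
Local Notation m := (size s).
Definition cn k := nth x0 s (k %% m).

Lemma cn_mod k : cn (k %% m) = cn k.
Proof. by rewrite /cn modn_mod. Qed.

Lemma cn_addm k : cn (k + m) = cn k.
Proof. by rewrite /cn modnDr. Qed.

Lemma cn_small k : k < m -> cn k = nth x0 s k.
Proof. by move=> h; rewrite /cn modn_small. Qed.

Lemma cn_step k : step M (cn k) (cn k.+1).
Proof.
rewrite -(cn_mod k) -(cn_mod k.+1) -addn1 -modnDml addn1.
have := ltn_pmod k hne; set j := k %% m => hj.
move: hcyc; rewrite (cycle_path x0) => /(pathP x0) hp.
case: (ltnP j.+1 m) => h.
  rewrite modn_small // cn_small // cn_small //.
  have := hp j.+1 h; done.
have ej : j.+1 = m by apply/eqP; rewrite eqn_leq hj h.
rewrite ej modnn cn_small // cn_small //.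
have := hp 0 hne => /=.
by rewrite -nth_last -ej.
Qed.

Lemma cn_tl k : tl M (cn k.+1) = hd M (cn k).
Proof. by have := cn_step k; rewrite /step => /eqP ->. Qed.

Lemma cn_tl' k : tl M (cn k) = hd M (cn (k + m.-1)).
Proof. by rewrite -cn_tl -addnS prednK // cn_addm. Qed.

Lemma cn_mem k : cn k \in s.
Proof. by rewrite /cn mem_nth // ltn_pmod. Qed.

Lemma mem_cn x : x \in s -> exists2 k, k < m & x = cn k.
Proof. by move=> hx; exists (index x s); rewrite ?index_mem // cn_small ?index_mem ?nth_index. Qed.

Lemma cn_hd_inj i j : hd M (cn i) = hd M (cn j) -> i %% m = j %% m.
Proof.
move=> h; apply/eqP; rewrite -(nth_uniq (hd M x0) _ _ huq) ?size_map ?ltn_pmod //.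
by rewrite !(nth_map x0) ?ltn_pmod // -/(cn i) -/(cn j) h.
Qed.

Lemma cn_tl_inj i j : tl M (cn i) = tl M (cn j) -> i %% m = j %% m.
Proof.
rewrite !cn_tl' => /cn_hd_inj /eqP; rewrite eqn_modDr => /eqP //.
Qed.

Lemma cn_eq i j : i %% m = j %% m -> cn i = cn j.
Proof. by rewrite /cn => ->. Qed.

Lemma tl_uniq x y : x \in s -> y \in s -> tl M x = tl M y -> x = y.
Proof.
move=> /mem_cn[i _ ->] /mem_cn[j _ ->] /cn_tl_inj; exact: cn_eq.
Qed.

Lemma hd_uniq x y : x \in s -> y \in s -> hd M x = hd M y -> x = y.
Proof. exact: uniq_map_eq. Qed.

Lemma succ_ex x : x \in s -> exists2 z, z \in s & step M x z.
Proof. by move=> /mem_cn[i _ ->]; exists (cn i.+1); [exact: cn_mem | exact: cn_step]. Qed.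

Lemma pred_ex x : x \in s -> exists2 z, z \in s & step M z x.
Proof.
move=> /mem_cn[i _ ->]; exists (cn (i + m.-1)); first exact: cn_mem.
by rewrite /step -cn_tl' eqxx.
Qed.

Lemma closure (X : pred edge) :
  (exists2 y, y \in s & X y) ->
  (forall y z, y \in s -> z \in s -> X y -> step M y z -> X z) ->
  forall z, z \in s -> X z.
Proof.
move=> [y /mem_cn[i hi ->] hX] hcl.
have H : forall k, X (cn (i + k)).
  elim=> [|k IH]; first by rewrite addn0.
  by apply: (hcl (cn (i + k))) => //; rewrite ?cn_mem // addnS cn_step.
move=> z /mem_cn[j hj ->].
have := H (j + m - i); rewrite subnKC ?cn_addm //.
by rewrite ltnW // ltn_addl.
Qed.

Definition seg i L := map (fun k => cn (i + k)) (iota 0 L).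

Lemma size_seg i L : size (seg i L) = L.
Proof. by rewrite size_map size_iota. Qed.

Lemma nth_seg i L k : k < L -> nth x0 (seg i L) k = cn (i + k).
Proof. by move=> h; rewrite (nth_map 0) ?size_iota // nth_iota. Qed.

Lemma mem_seg x i L : x \in seg i L -> exists2 k, k < L & x = cn (i + k).
Proof. by move=> /mapP[k]; rewrite mem_iota => /andP[_ h] ->; exists k. Qed.

Lemma seg_mem k i L : k < L -> cn (i + k) \in seg i L.
Proof. by move=> h; apply/mapP; exists k; rewrite ?mem_iota. Qed.

Lemma inner_seg i L : inner M (seg i L) = map (fun k => hd M (cn (i + k))) (iota 0 L.-1).
Proof.
rewrite /inner size_seg /seg -map_take take_iota -map_comp.
by rewrite /minn; case: ifP => // /negbT; rewrite -leqNgt; case: L => //= n; rewrite ltnn.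
Qed.

Lemma seg_dpath i L : 0 < L -> L < m -> all (fun y => y \in E) s ->
  dpath_seq E M (tl M (cn i)) (seg i L) (hd M (cn (i + L.-1))).
Proof.
case: L => // L _ hL hE.
exists (cn (i + 0)), (map (fun k => cn (i + k)) (iota 1 L)).
split; first by [].
split.
  apply/allP => y /mem_seg[k _ ->]; exact: (allP hE _ (cn_mem _)).
split.
  apply/(pathP x0) => j; rewrite size_map size_iota => hj.
  have -> : cn (i + 0) :: map (fun k => cn (i + k)) (iota 1 L) = seg i L.+1 by [].
  rewrite nth_seg ?(ltn_trans hj) // (nth_map 0) ?size_iota // nth_iota //.
  by rewrite add1n addnS cn_step.
split; first by rewrite addn0.
split.
  rewrite (last_nth x0) size_map size_iota.
  have -> : cn (i + 0) :: map (fun k => cn (i + k)) (iota 1 L) = seg i L.+1 by [].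
  by rewrite nth_seg.
rewrite cn_tl' /seg -map_comp.
have -> : hd M (cn (i + m.-1)) = ((hd M) \o (fun k => cn (i + k))) m.-1 by [].
rewrite -(map_cons _ m.-1) map_inj_in_uniq.
  rewrite cons_uniq iota_uniq andbT mem_iota add0n leq0n /= -leqNgt -ltnS prednK //.
have hk : forall k, k \in m.-1 :: iota 0 L.+1 -> k < m.
  move=> k; rewrite inE mem_iota add0n => /orP[/eqP->|/andP[_ h]].
    by rewrite ltn_predL.
  exact: ltn_trans h hL.
move=> k1 k2 h1 h2 /= /cn_hd_inj /eqP.
by rewrite eqn_modDl !modn_small ?(hk _ h1) ?(hk _ h2) // => /eqP.
Qed.

End Cyc.

Definition cb (P : Prop) : bool := if excluded_middle_informative P then true else false.
Lemma cbP (P : Prop) : reflect P (cb P).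
Proof. by rewrite /cb; case: excluded_middle_informative => h; constructor. Qed.

Definition ind (b : bool) : int := if b then 1%R else 0%R.

Lemma ind_ge0 b : (0 <= ind b)%R.
Proof. by case: b. Qed.

Section Sums.
Variable T : finType.
Lemma sum_single (H : {set T}) (P : pred T) x :
  (forall y, y \in H -> P y -> y = x) -> P x ->
  (\sum_(y in H) ind (P y) = ind (x \in H))%R.
Proof.
move=> hu hx; case: (boolP (x \in H)) => hxH.
  rewrite (bigD1 x) //= hx big1 ?addr0 // => y /andP[hy hne].
  by case: (boolP (P y)) => // py; rewrite (hu y hy py) eqxx in hne.
by rewrite big1 // => y hy; case: (boolP (P y)) => // py; rewrite -(hu y hy py) hy in hxH.
Qed.

Lemma sum_zero (H : {set T}) (P : pred T) :
  (forall y, y \in H -> ~~ P y) -> (\sum_(y in H) ind (P y) = 0)%R.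
Proof. by move=> h; rewrite big1 // => y /h; case: (P y). Qed.
End Sums.

Lemma find_last (P : pred nat) i : P 0 -> 0 < i ->
  exists a, [/\ a < i, P a & forall j, a < j -> j < i -> ~~ P j].
Proof.
move=> h0; elim: i => // i IH _.
case: (boolP (P i)) => hi.
  by exists i; split => // j h1 h2; move: (leq_trans h2 h1); rewrite ltnn.
case: i IH hi => [|i] IH hi; first by rewrite h0 in hi.
have [a [h1 h2 h3]] := IH isT.
exists a; split => //; first by apply: ltn_trans h1 _.
move=> j hj hj'; case: (ltngtP j i.+1) => [hl|hg|->] //.
- exact: h3.
- by move: (leq_trans hj' hg); rewrite ltnn.
Qed.

Lemma find_first (P : pred nat) d i : P (i + d) ->
  exists b, [/\ i <= b, b <= i + d, P b & forall j, i <= j -> j < b -> ~~ P j].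
Proof.
elim: d i => [|d IH] i h.
  by exists i; rewrite addn0 in h *; split => // j h1 h2; move: (leq_trans h2 h1); rewrite ltnn.
case: (boolP (P i)) => hi.
  by exists i; split => //; [rewrite leq_addr | move=> j h1 h2; move: (leq_trans h2 h1); rewrite ltnn].
have := IH i.+1; rewrite addSnnS => /(_ h) [b [h1 h2 h3 h4]].
exists b; split => //; first by apply: ltnW.
move=> j hj hj'; case: (ltngtP j i) => [hl|hg|->] //.
- by move: (leq_trans hl hj); rewrite ltnn.
- exact: h4.
Qed.

Lemma idx_closure (P : nat -> Prop) l i : i < l -> P i ->
  (forall k, k.+1 < l -> P k -> P k.+1) ->
  (forall k, k.+1 < l -> P k.+1 -> P k) -> forall k, k < l -> P k.
Proof.
move=> hi hP hf hb k hk.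
case: (leqP i k) => hik.
  have: forall d, i + d < l -> P (i + d).
    elim=> [|d IH]; first by rewrite addn0.
    move=> h; rewrite addnS; apply: (hf (i + d)); first by rewrite -addnS.
    apply: IH; apply: leq_ltn_trans h; by rewrite leq_add2l.
  by move/(_ (k - i)); rewrite subnKC //; apply.
have: forall d, d <= i -> P (i - d).
  elim=> [|d IH]; first by rewrite subn0.
  move=> h; apply: (hb (i - d.+1)); rewrite (subnSK h); first by apply: leq_ltn_trans (leq_subr _ _) hi.
  by apply: IH; apply: ltnW.
move/(_ (i - k)); rewrite subKn; last exact: ltnW.
by apply; rewrite leq_subr.
Qed.

Section Vof.
Variables (A B : finType) (M : {set A * B}).
Lemma hd_Vof (H : {set A * B}) x : x \in H -> hd M x \in Vof H.
Proof.
move=> hx; rewrite /hd /Vof; case: ifP => _; rewrite inE; apply/orP; [right|left];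
  by apply/imsetP; exists x.
Qed.
Lemma tl_Vof (H : {set A * B}) x : x \in H -> tl M x \in Vof H.
Proof.
move=> hx; rewrite /tl /Vof; case: ifP => _; rewrite inE; apply/orP; [left|right];
  by apply/imsetP; exists x.
Qed.
Lemma tl_neq_hd x : tl M x != hd M x.
Proof. by rewrite /tl /hd; case: ifP. Qed.
End Vof.

Section Bal.
Variables (A B : finType) (M : {set A * B}).
Variable s : seq (A * B).
Hypothesis hcyc : cycle (step M) s.
Hypothesis huq : uniq (map (hd M) s).

Lemma balance w :
  (\sum_(y in [set x in s]) ind (hd M y == w) = \sum_(y in [set x in s]) ind (tl M y == w))%R.
Proof.
have hne : forall x, x \in s -> 0 < size s.
  by move=> x hx; rewrite lt0n size_eq0; apply/eqP => h; rewrite h in hx.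
case: (boolP [exists y in [set x in s], hd M y == w]).
  move=> /exists_inP[y]; rewrite inE => hy /eqP hw.
  have [z hz hst] := succ_ex hcyc (hne _ hy) y hy.
  rewrite (sum_single (x := y)) ?(sum_single (x := z)) ?inE ?hy ?hz //.
  - move=> z'; rewrite inE => hz' /eqP hw'; apply: (tl_uniq hcyc huq (hne _ hy)) => //.
    by move: hst; rewrite /step => /eqP <-; rewrite hw'.
  - by move: hst; rewrite /step => /eqP <-; rewrite hw.
  - move=> y'; rewrite inE => hy' /eqP hw'; apply: (hd_uniq huq) => //; by rewrite hw'.
  - by rewrite hw.
move=> hn; rewrite !sum_zero // => y; rewrite inE => hy.
  apply/negP => /eqP hw.
  have [z hz hst] := pred_ex hcyc (hne _ hy) y hy.
  case/negP: hn; apply/exists_inP; exists z; rewrite ?inE //.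
  by move: hst; rewrite /step => /eqP ->; rewrite hw.
by apply/negP => hw; case/negP: hn; apply/exists_inP; exists y; rewrite ?inE.
Qed.
End Bal.

Lemma disjP (T : finType) (A0 B0 : {set T}) :
  (forall x, x \in A0 -> x \in B0 -> False) -> [disjoint A0 & B0].
Proof. move=> h; rewrite disjoint_subset; apply/subsetP => x hx; rewrite inE; apply/negP; exact: h. Qed.

Section DP.
Variables (A B : finType) (E M : {set A * B}).
Lemma dp_idx u qs v x0 : dpath_seq E M u qs v ->
  [/\ 0 < size qs, (forall k, k.+1 < size qs -> hd M (nth x0 qs k) = tl M (nth x0 qs k.+1)),
      hd M (nth x0 qs (size qs).-1) = v & tl M (nth x0 qs 0) = u].
Proof.
case=> x [s' [-> [_ [hp [htl [hhd _]]]]]]; split => //.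
- move=> k hk; move/(pathP x0): hp => /(_ k hk) /eqP; done.
- by rewrite /= -(last_nth x0).
Qed.

Lemma inner_idx qs x0 (W : {set A + B}) k : all (fun y => y \notin W) (inner M qs) ->
  k.+1 < size qs -> hd M (nth x0 qs k) \notin W.
Proof.
move=> /allP h hk; apply: h; rewrite /inner; apply/mapP; exists (nth x0 (take (size qs).-1 qs) k).
  by apply: mem_nth; rewrite size_takel ?leq_pred // -ltnS (ltn_predK hk).
by rewrite nth_take // -ltnS (ltn_predK hk).
Qed.

Lemma dp_uv u qs v : dpath_seq E M u qs v -> u != v.
Proof.
case=> x [s' [-> [_ [_ [_ [hhd hu]]]]]]; move: hu; rewrite cons_uniq => /andP[hn _].
apply/eqP => huv; case/negP: hn; rewrite huv -hhd; apply: map_f; exact: mem_last.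
Qed.
End DP.

Lemma arith1 pv pu m : pv < pu -> pu < m -> 0 < pu - pv /\ pu - pv < m.
Proof. move=> *; split; lia. Qed.
Lemma arith2 pv pu m : pu < pv -> pv < m -> [/\ 0 < pu + m - pv, pu + m - pv < m & pv <= pu + m].
Proof. move=> *; split; lia. Qed.

Section Main.
Variables (A B : finType) (E R M Cp Ce : {set A * B}) (e : A * B).
Variables (sp se : seq (A * B)).
Hypotheses (hCp : Cp = [set x in sp]) (hEp : all (fun y => y \in E) sp)
  (hcp : cycle (step M) sp) (hup : uniq (map (hd M) sp)).
Hypotheses (hCe : Ce = [set x in se]) (hEe : all (fun y => y \in E) se)
  (hce : cycle (step M) se) (hue : uniq (map (hd M) se)).
Hypotheses (heCp : e \in Cp) (heCe : e \in Ce).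
Local Notation V := (Vof Cp).

Lemma hsp : 0 < size sp.
Proof. by move: heCp; rewrite hCp inE; case: sp. Qed.
Lemma hse : 0 < size se.
Proof. by move: heCe; rewrite hCe inE; case: se. Qed.

Lemma Cp_tl x y : x \in Cp -> y \in Cp -> tl M x = tl M y -> x = y.
Proof. rewrite hCp !inE; exact: (tl_uniq hcp hup hsp e). Qed.
Lemma Cp_hd x y : x \in Cp -> y \in Cp -> hd M x = hd M y -> x = y.
Proof. rewrite hCp !inE; exact: (hd_uniq hup). Qed.
Lemma Ce_tl x y : x \in Ce -> y \in Ce -> tl M x = tl M y -> x = y.
Proof. rewrite hCe !inE; exact: (tl_uniq hce hue hse e). Qed.
Lemma Ce_hd x y : x \in Ce -> y \in Ce -> hd M x = hd M y -> x = y.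
Proof. rewrite hCe !inE; exact: (hd_uniq hue). Qed.

Lemma jump_sub Q1 Q2 y : is_jump E M Cp Ce Q1 -> is_jump E M Cp Ce Q2 ->
  y \in Q1 -> y \in Q2 -> Q1 \subset Q2.
Proof.
move=> [hs1 [u1 [qs1 [v1 [hd1 [hQ1 [hu1 [hv1 [hin1 _]]]]]]]]].
move=> [hs2 [u2 [qs2 [v2 [hd2 [hQ2 [hu2 [hv2 [hin2 _]]]]]]]]].
have [hl1 hst1 hla1 hfi1] := dp_idx e hd1.
have [hl2 hst2 hla2 hfi2] := dp_idx e hd2.
have inCe1 : forall k, k < size qs1 -> nth e qs1 k \in Ce.
  by move=> k hk; apply: (subsetP hs1); rewrite hQ1 inE mem_nth.
have inCe2 : forall k, k < size qs2 -> nth e qs2 k \in Ce.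
  by move=> k hk; apply: (subsetP hs2); rewrite hQ2 inE mem_nth.
rewrite hQ1 hQ2 inE => /(nthP e)[i hi hy]; rewrite inE => hy2.
apply/subsetP => z; rewrite inE => /(nthP e)[k hk <-]; rewrite inE.
apply: (idx_closure (P := fun k => nth e qs1 k \in qs2) hi) => //; first by rewrite hy.
- move=> j hj /(nthP e)[m hm hme].
  have hn : hd M (nth e qs1 j) \notin V := inner_idx e hin1 hj.
  have hm1 : m.+1 < size qs2.
    rewrite ltnNge; apply/negP => hge.
    have em : m = (size qs2).-1.
      by apply/eqP; rewrite eqn_leq -ltnS (ltn_predK hm) hm -ltnS (ltn_predK hm) hge.
    by move: hn; rewrite -hme em hla2 hv2.
  have -> : nth e qs1 j.+1 = nth e qs2 m.+1.
    apply: Ce_tl; [exact: inCe1 | exact: inCe2 |].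
    by rewrite -hst1 // -hst2 // hme.
  exact: mem_nth.
- move=> j hj /(nthP e)[m hm hme].
  have hn : hd M (nth e qs1 j) \notin V := inner_idx e hin1 hj.
  case: m hm hme => [|m] hm hme.
    by move: hn; rewrite hst1 // -hme hfi2 hu2.
  have -> : nth e qs1 j = nth e qs2 m.
    apply: Ce_hd; [exact: inCe1 (ltn_trans _ hj) | exact: inCe2 (ltn_trans _ hm) |].
    by rewrite hst1 // hst2 // hme.
  exact: mem_nth (ltn_trans _ hm).
Qed.

Lemma jump_eq Q1 Q2 y : is_jump E M Cp Ce Q1 -> is_jump E M Cp Ce Q2 ->
  y \in Q1 -> y \in Q2 -> Q1 = Q2.
Proof.
move=> h1 h2 y1 y2; apply/eqP; rewrite eqEsubset.
by rewrite (jump_sub h1 h2 y1 y2) (jump_sub h2 h1 y2 y1).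
Qed.

Lemma V_hd w : w \in V -> exists2 k, k < size sp & hd M (cn sp e k) = w.
Proof.
have H : forall x, x \in Cp -> w = hd M x \/ w = tl M x ->
    exists2 k, k < size sp & hd M (cn sp e k) = w.
  move=> x; rewrite hCp inE => /(mem_cn e)[k hk ->] [->|->].
    by exists k.
  exists ((k + (size sp).-1) %% size sp); first by rewrite ltn_pmod // hsp.
  by rewrite cn_mod -(cn_tl' hcp hsp).
rewrite /Vof inE => /orP[] /imsetP[x hx hw]; apply: (H x hx); rewrite hw /hd /tl;
  by case: ifP; auto.
Qed.

Lemma CQ_spec Q : is_jump E M Cp Ce Q ->
  [/\ is_dcycle E M (CQ E M Cp Q), Q \subset CQ E M Cp Q & CQ E M Cp Q \subset Cp :|: Q].
Proof.
move=> [hsQ [u [qs [v [hdp [hQ [hu [hv [hin hdis]]]]]]]]].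
suff: exists D, is_dcycle E M D /\ Q \subset D /\ D \subset Cp :|: Q.
  move=> hex; have [h1 [h2 h3]] := epsilon_spec (inhabits set0) _ hex.
  by rewrite /CQ; split.
have [hl hst hla hfi] := dp_idx e hdp.
have huv := dp_uv hdp.
have [pv hpv hpve] := V_hd hv.
have [pu hpu hpue] := V_hd hu.
have hpuv : pu != pv by apply: contraNneq huv => h; rewrite -hpue -hpve h.
pose L := if pv < pu then pu - pv else pu + size sp - pv.
have [hL0 hLm hLc] : [/\ 0 < L, L < size sp & cn sp e (pv + L) = cn sp e pu].
  rewrite /L; case: (ltnP pv pu) => h.
    have [a1 a2] := arith1 h hpu.
    split; [exact: a1 | exact: a2 | by rewrite subnKC // ltnW].
  have h' : pu < pv by rewrite ltn_neqAle hpuv h.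
  have [a1 a2 a3] := arith2 h' hpv.
  split; [exact: a1 | exact: a2 |].
  by rewrite subnKC ?(cn_addm) //.
pose arc := seg sp e pv.+1 L.
have hda := seg_dpath hcp hup hsp e pv.+1 hL0 hLm hEp.
rewrite (cn_tl hcp hsp) hpve addSnnS (ltn_predK hL0) hLc hpue -/arc in hda.
have hauq : uniq (v :: map (hd M) arc) by case: hda => a [s' [-> [_ [_ [_ [_ ->]]]]]].
have harcCp : forall x, x \in arc -> x \in Cp.
  by move=> x /mem_seg[k _ ->]; rewrite hCp inE (cn_mem hsp).
exists [set x in qs ++ arc]; split; last first.
  split; apply/subsetP => x; rewrite !inE ?hQ ?inE mem_cat.
    by move=> ->.
  by case/orP => [->|/harcCp ->]; rewrite ?orbT.
exists (qs ++ arc); split; first by case: (qs) hl.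
split; first by [].
split.
  rewrite all_cat; apply/andP; split; first by case: hdp => x [s' [-> [h _]]].
  by case: hda => x [s' [-> [h _]]].
split.
  case: hdp => q [qs' [hq [_ [hpq [htlq [hhdq _]]]]]].
  case: hda => a [arc' [ha [_ [hpa [htla [hhda _]]]]]].
  rewrite hq ha cat_cons /= rcons_cat cat_path hpq /= rcons_path hpa /step.
  by rewrite hhdq htla hhda htlq !eqxx.
rewrite map_cat cat_uniq; apply/and3P; split.
- case: hdp => x [s' [-> [_ [_ [_ [_ hu']]]]]].
  by move: hu'; rewrite cons_uniq => /andP[].
- apply/hasPn => w /mapP[x hx ->]; apply/negP => /mapP[y hy hyx].
  have hxV : hd M x \in V by apply: hd_Vof; exact: harcCp.
  move: hauq; rewrite cons_uniq => /andP[hvn _].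
  move: hy => /(nthP e)[k hk hke]; subst y.
  case: (ltnP k.+1 (size qs)) => hk1.
    by move: (inner_idx e hin hk1); rewrite -hyx hxV.
  have ek : k = (size qs).-1.
    by apply/eqP; rewrite eqn_leq -ltnS (ltn_predK hk) hk -ltnS (ltn_predK hk) hk1.
  by move: hvn; rewrite -hla -ek -hyx map_f.
- by move: hauq; rewrite cons_uniq => /andP[_ ->].
Qed.

Lemma arith3 a b i : a < i -> i <= b -> a.+1 + (b - a).-1 = b.
Proof. move=> *; lia. Qed.
Lemma arith4 a b i k : a < i -> i <= b -> k < (b - a).-1 -> a < a.+1 + k /\ a.+1 + k < b.
Proof. move=> *; split; lia. Qed.
Lemma arith5 a b i k : a < i -> i <= b -> k < b - a -> ~~ (k < (b - a).-1) -> 0 < k ->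
  a < a.+1 + k.-1 /\ a.+1 + k.-1 < b.
Proof. move=> *; split; lia. Qed.
Lemma arith6 a b i k : a < i -> i <= b -> k < b - a -> ~~ (k < (b - a).-1) -> k = 0 -> a.+1 = i.
Proof. move=> *; lia. Qed.
Lemma arith7 a b i : a < i -> i <= b -> i - a.+1 < b - a /\ a.+1 + (i - a.+1) = i.
Proof. move=> *; split; lia. Qed.
Lemma arith8 a b i m : a < i -> i <= b -> b <= m.-1 -> 0 < m -> 0 < b - a /\ b - a < m.
Proof. move=> *; split; lia. Qed.

Lemma arith9 k pe m : k < pe -> pe < m -> k + m - pe < m /\ pe <= k + m.
Proof. move=> *; split; lia. Qed.
Lemma arith10 i m : i < m -> i <= m.-1.
Proof. move=> *; lia. Qed.
Lemma ar_int (h t ix iz : int) : (h + ix = t + iz)%R ->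
  ((1 - ix) - (1 - iz) = h - t)%R /\ ((- ix) - (- iz) = h - t)%R.
Proof. move=> *; split; lia. Qed.
Lemma ar_int2 (ix iz a b sx sz : int) : (ix + a = iz + b)%R -> (sx - sz = a - b)%R ->
  (ix + sx = iz + sz)%R.
Proof. move=> *; lia. Qed.

Lemma jump_cover y : y \in Ce -> y \notin Cp -> exists Q, is_jump E M Cp Ce Q /\ y \in Q.
Proof.
move=> hyCe hyCp.
have hme := hse.
have heS : e \in se by move: heCe; rewrite hCe inE.
pose pe := index e se.
have hpe : pe < size se by rewrite index_mem.
have hcpe : cn se e pe = e by rewrite cn_small // nth_index.
have [k hk hyk] : exists2 k, k < size se & y = cn se e k.
  by apply: mem_cn; move: hyCe; rewrite hCe inE.
have [i hi hyi] : exists2 i, i < size se & cn se e (pe + i) = y.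
  case: (leqP pe k) => h.
    exists (k - pe); last by rewrite subnKC.
    exact: leq_ltn_trans (leq_subr _ _) hk.
  have [a1 a2] := arith9 h hpe.
  by exists (k + size se - pe); rewrite // subnKC // cn_addm.
have hin0 : 0 < i.
  rewrite lt0n; apply/negP => /eqP h0; move: hyi; rewrite h0 addn0 hcpe => hey.
  by rewrite -hey heCp in hyCp.
pose Pr := fun j => hd M (cn se e (pe + j)) \in V.
have hP0 : Pr 0 by rewrite /Pr addn0 hcpe; exact: hd_Vof heCp.
have hPm : Pr (size se).-1 by rewrite /Pr -(cn_tl' hce hse) hcpe; exact: tl_Vof heCp.
have [a [ha hPa hna]] := find_last (P := Pr) hP0 hin0.
have hPm' : Pr (i + ((size se).-1 - i)) by rewrite subnKC // arith10.
have [b [hib hbm hPb hnb]] := find_first hPm'.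
rewrite subnKC in hbm; last exact: arith10.
have between : forall j, a < j -> j < b -> ~~ Pr j.
  by move=> j h1 h2; case: (ltnP j i) => h; [exact: hna | exact: hnb].
have [hL0 hLm] := arith8 ha hib hbm hme.
have hda := seg_dpath hce hue hse e (pe + a.+1) hL0 hLm hEe.
have e1 : tl M (cn se e (pe + a.+1)) = hd M (cn se e (pe + a)) by rewrite addnS (cn_tl hce hse).
have e2 : pe + a.+1 + (b - a).-1 = pe + b by rewrite -addnA (arith3 ha hib).
rewrite e1 e2 in hda.
exists [set x in seg se e (pe + a.+1) (b - a)]; split.
  split.
    by apply/subsetP => x; rewrite inE => /mem_seg[k' _ ->]; rewrite hCe inE (cn_mem hse).
  exists (hd M (cn se e (pe + a))), (seg se e (pe + a.+1) (b - a)), (hd M (cn se e (pe + b))).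
  split; first exact: hda.
  split; first by [].
  split; first exact: hPa.
  split; first exact: hPb.
  split.
    rewrite inner_seg; apply/allP => w /mapP[k' hk' ->]; rewrite mem_iota add0n in hk'.
    have [h1 h2] := arith4 ha hib hk'.
    by rewrite -addnA; exact: between h1 h2.
  apply: disjP => x; rewrite inE => /mem_seg[k' hk' ->] hxCp.
  case: (boolP (k' < (b - a).-1)) => hk1.
    have [h1 h2] := arith4 ha hib hk1.
    by move: (between _ h1 h2) => /negP; apply; rewrite /Pr addnA; exact: hd_Vof hxCp.
  case: (posnP k') => hk0.
    have hai := arith6 ha hib hk' hk1 hk0.
    by move: hxCp; rewrite hk0 addn0 hai hyi => hh; rewrite hh in hyCp.
  have [h1 h2] := arith5 ha hib hk' hk1 hk0.
  move: (between _ h1 h2) => /negP; apply.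
  have := tl_Vof M hxCp.
  have -> : pe + a.+1 + k' = (pe + (a.+1 + k'.-1)).+1 by rewrite addnA -addnS prednK.
  by rewrite (cn_tl hce hse).
have [h1 h2] := arith7 ha hib.
rewrite inE -hyi.
have -> : pe + i = pe + a.+1 + (i - a.+1) by rewrite -addnA h2.
exact: seg_mem.
Qed.

Lemma interjump_ex x : x \in Ce -> x \in Cp -> exists2 P, is_interjump E M Cp Ce P & x \in P.
Proof.
move=> hxe hxp.
case: (boolP (Ce \subset Cp)) => hsub; first by exists Ce; rewrite // /is_interjump hsub.
pose cand (P : {set A * B}) := cb (subpath E M Ce P /\ P \subset Cp /\ x \in P).
have hc1 : cand [set x].
  apply/cbP; split; last by split; [rewrite sub1set | rewrite inE].
  split; first by rewrite sub1set.
  exists (tl M x), (hd M x), [:: x]; split; last by apply/setP => z; rewrite !inE.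
  exists x, [::]; split => //; split.
    by rewrite /= andbT; apply: (allP hEe); move: hxe; rewrite hCe inE.
  by split => //; split => //; split => //=; rewrite inE andbT tl_neq_hd.
case: (@arg_maxnP _ [set x] cand (fun P => #|P|) hc1) => P0 /cbP [hsp0 [hP0 hxP0]] hmax.
exists P0 => //; rewrite /is_interjump (negbTE hsub); split => //; split => // P' h1 h2 h3.
apply/esym/eqP; rewrite eqEcard h3 /=; apply: hmax; apply/cbP; split => //; split => //.
exact: (subsetP h3).
Qed.

Hypothesis hnb : ~ (exists Q, is_jump E M Cp Ce Q /\ ~ forward E R M Cp Q /\ e \in reach E R M Cp Q).

Definition J := [set Q : {set A * B} | cb (is_jump E M Cp Ce Q)].
Definition fwd Q : bool := (0 < wM R M (CQ E M Cp Q))%R.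
Definition cov Q x : int :=
  if fwd Q then ind (x \notin CQ E M Cp Q) else (- ind (x \in CQ E M Cp Q))%R.
Definition total x : int := (ind (x \in Ce) + \sum_(Q in J) cov Q x)%R.

Lemma cover_J : cover J = Ce :\: Cp.
Proof.
apply/setP => y; rewrite /cover in_setD; apply/bigcupP/andP.
  move=> [Q]; rewrite inE => /cbP hJ hyQ.
  case: hJ => hs [u [s [v [_ [_ [_ [_ [_ hdis]]]]]]]].
  by split; [rewrite (disjointFr hdis hyQ) | exact: (subsetP hs)].
move=> [hn hy]; have [Q [hJ hyQ]] := jump_cover hy hn.
by exists Q => //; rewrite inE; apply/cbP.
Qed.

Lemma triv_J : trivIset J.
Proof.
apply/trivIsetP => Q1 Q2; rewrite !inE => /cbP h1 /cbP h2 hne.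
by apply: disjP => y y1 y2; case/eqP: hne; exact: jump_eq h1 h2 y1 y2.
Qed.

Lemma ind_neg b : ind (~~ b) = (1 - ind b)%R.
Proof. by case: b. Qed.

Lemma cov_diff Q x z : Q \in J -> x \in Cp -> z \in Cp -> hd M x = tl M z ->
  (cov Q x - cov Q z = \sum_(y in Q) ind (hd M y == hd M x)
                       - \sum_(y in Q) ind (tl M y == hd M x))%R.
Proof.
rewrite inE => /cbP hJ hx hz hxz.
have [[sD [hne [hDs [_ [hcD huD]]]]] hQD hDQ] := CQ_spec hJ.
have hdis : [disjoint Q & Cp] by case: hJ => _ [u [s [v [_ [_ [_ [_ [_ h]]]]]]]].
set D := CQ E M Cp Q in hDs hQD hDQ *.
have bal := balance hcD huD (hd M x).
rewrite -hDs [LHS](big_setID Q) [RHS](big_setID Q) /= (setIidPr hQD) in bal.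
have inCp : forall y, y \in D :\: Q -> y \in Cp.
  move=> y; rewrite in_setD => /andP[hyQ hyD].
  by move: (subsetP hDQ y hyD); rewrite in_setU (negbTE hyQ) orbF.
have s1 : (\sum_(y in D :\: Q) ind (hd M y == hd M x) = ind (x \in D))%R.
  rewrite (sum_single (x := x)) ?eqxx //.
    by rewrite in_setD (disjointFl hdis hx).
  by move=> y hy /eqP; apply: Cp_hd => //; exact: inCp.
have s2 : (\sum_(y in D :\: Q) ind (tl M y == hd M x) = ind (z \in D))%R.
  rewrite (sum_single (x := z)) ?hxz ?eqxx //.
    by rewrite in_setD (disjointFl hdis hz).
  by move=> y hy /eqP; apply: Cp_tl => //; exact: inCp.
rewrite s1 s2 in bal.
have [r1 r2] := ar_int bal.
by rewrite /cov; case: (fwd Q); rewrite ?ind_neg.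
Qed.

Lemma total_step x z : x \in Cp -> z \in Cp -> hd M x = tl M z -> total x = total z.
Proof.
move=> hx hz hxz.
have bal := balance hce hue (hd M x).
rewrite -hCe [LHS](big_setID Cp) [RHS](big_setID Cp) /= in bal.
have s1 : (\sum_(y in Ce :&: Cp) ind (hd M y == hd M x) = ind (x \in Ce))%R.
  rewrite (sum_single (x := x)) ?eqxx ?inE ?hx ?andbT //.
  by move=> y; rewrite inE => /andP[_ hy] /eqP; apply: Cp_hd.
have s2 : (\sum_(y in Ce :&: Cp) ind (tl M y == hd M x) = ind (z \in Ce))%R.
  rewrite (sum_single (x := z)) ?hxz ?eqxx ?inE ?hz ?andbT //.
  by move=> y; rewrite inE => /andP[_ hy] /eqP; apply: Cp_tl.
rewrite s1 s2 -cover_J !big_trivIset ?triv_J // in bal.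
have hc : (\sum_(Q in J) cov Q x - \sum_(Q in J) cov Q z =
   \sum_(Q in J) (\sum_(y in Q) ind (hd M y == hd M x))
   - \sum_(Q in J) (\sum_(y in Q) ind (tl M y == hd M x)))%R.
  by rewrite -!sumrB; apply: eq_bigr => Q hQ; exact: cov_diff.
exact: ar_int2 bal hc.
Qed.

Lemma ar_int3 (s : int) : ~ (1 + s <= s)%R.
Proof. move=> *; lia. Qed.

Lemma total_const x : x \in Cp -> total x = total e.
Proof.
move=> hx.
have hxs : x \in sp by move: hx; rewrite hCp inE.
have hes : e \in sp by move: heCp; rewrite hCp inE.
apply/eqP; apply: (@closure _ _ M sp hcp hsp e (fun y => total y == total e)) hxs.
  by exists e => //=.
move=> y z hy hz /= /eqP hy' hst; apply/eqP; rewrite -hy'; apply/esym.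
by apply: total_step; rewrite ?hCp ?inE //; apply/eqP.
Qed.

Lemma cov_e_ge0 Q : Q \in J -> (0 <= cov Q e)%R.
Proof.
rewrite inE => /cbP hJ; rewrite /cov; case: ifP => hf; first exact: ind_ge0.
case: (boolP (e \in CQ E M Cp Q)) => he //.
exfalso; apply: hnb; exists Q; split => //; split.
  by rewrite /forward => h; rewrite /fwd h in hf.
have hdis : [disjoint Q & Cp] by case: hJ => _ [u [s [v [_ [_ [_ [_ [_ h]]]]]]]].
by rewrite /reach -/(fwd Q) hf in_setD (disjointFl hdis heCp).
Qed.

Lemma main_count x : x \in Cp -> x \notin Ce ->
  exists Q, [/\ Q \in J, fwd Q, x \notin CQ E M Cp Q & e \in CQ E M Cp Q].
Proof.
move=> hx hxe.
have t1 := total_const hx.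
rewrite /total (negbTE hxe) heCe /= add0r in t1.
case: (boolP [exists Q in J, (cov Q e < cov Q x)%R]).
  move=> /exists_inP[Q hQ hlt]; exists Q.
  have hge := cov_e_ge0 hQ.
  move: hlt hge; rewrite /cov; case: ifP => hf.
    by case: (x \in CQ E M Cp Q); case: (e \in CQ E M Cp Q).
  by case: (x \in CQ E M Cp Q); case: (e \in CQ E M Cp Q).
move=> /exists_inPn hn.
have : (\sum_(Q in J) cov Q x <= \sum_(Q in J) cov Q e)%R.
  by apply: ler_sum => Q hQ; move: (hn Q hQ); rewrite -leNgt.
rewrite t1 => h; exfalso; exact: ar_int3 h.
Qed.
Lemma final_sec :
  exists QQ : {set {set A * B}},
    (forall Q, Q \in QQ -> is_jump E M Cp Ce Q /\ forward E R M Cp Q) /\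
    (forall x, x \in Cp <->
       ((exists2 Q, Q \in QQ & x \in reach E R M Cp Q) \/
        (exists2 P, is_interjump E M Cp Ce P & x \in P))) /\
    (forall Q, Q \in QQ -> e \notin reach E R M Cp Q).
Proof.
exists [set Q | cb (is_jump E M Cp Ce Q /\ forward E R M Cp Q /\ e \notin reach E R M Cp Q)].
split; first by move=> Q; rewrite inE => /cbP[h1 [h2 _]].
split; last by move=> Q; rewrite inE => /cbP[_ [_ h]].
move=> x; split.
  move=> hx; case: (boolP (x \in Ce)) => hxe.
    by right; apply: interjump_ex.
  have [Q [hQ hf hxQ heQ]] := main_count hx hxe.
  left; exists Q.
    rewrite inE; apply/cbP; split; first by move: hQ; rewrite inE => /cbP.
    split; first exact: hf.
    by rewrite /reach -/(fwd Q) hf in_setD heQ.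
  by rewrite /reach -/(fwd Q) hf in_setD hxQ.
case=> [[Q hQ hxr] | [P hP hxP]].
  move: hQ; rewrite inE => /cbP[_ [hf _]].
  by move: hxr; rewrite /reach; rewrite /forward in hf; rewrite hf in_setD => /andP[].
move: hP; rewrite /is_interjump; case: ifP => hs.
  by move=> hPe; subst P; exact: (subsetP hs).
by move=> [_ [h _]]; exact: (subsetP h).
Qed.

End Main.

Theorem lemma6 (A B : finType) (E R : {set A * B}) (k : nat)
    (Ms M : {set A * B}) (Me : A * B -> {set A * B}) (Cp Ce : {set A * B})
    (e : A * B) :
  R \subset E ->
  is_Me E R Me ->
  critical E R k Ms M Me ->
  (* C^+ : the positive-weight directed cycle of G_M contained in M Δ M* *)
  is_dcycle E M Cp -> Cp \subset symdiff M Ms -> (0 < wM R M Cp)%R ->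
  e \in Eplus R M Cp ->
  (* C_e : the directed cycle of G_M in M Δ M^e containing e *)
  is_dcycle E M Ce -> Ce \subset symdiff M (Me e) -> e \in Ce ->
  (* e is not in r_b(C_e) *)
  ~ (exists Q, is_jump E M Cp Ce Q /\ ~ forward E R M Cp Q /\ e \in reach E R M Cp Q) ->
  exists QQ : {set {set A * B}},
    (forall Q, Q \in QQ -> is_jump E M Cp Ce Q /\ forward E R M Cp Q) /\
    (forall x, x \in Cp <->
       ((exists2 Q, Q \in QQ & x \in reach E R M Cp Q) \/
        (exists2 P, is_interjump E M Cp Ce P & x \in P))) /\
    (forall Q, Q \in QQ -> e \notin reach E R M Cp Q).
Proof.
move=> _ _ _ [sp [_ [hCp [hEp [hcp hup]]]]] _ _ heP [se [_ [hCe [hEe [hce hue]]]]] _ heCe hnb.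
have heCp : e \in Cp by move: heP; rewrite inE => /andP[].
exact: (final_sec hCp hEp hcp hup hCe hEe hce hue heCp heCe hnb).
Qed.
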